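(* Let $m \ge 1$ and let $S_1 \neq S_2$ be finite nonempty multisets of vectors in $\mathbb{R}^m$ with $|S_1| = |S_2|$. For $p \in (0,1)$ and $i \in \{1,2\}$, let $M_i^{(p)}$ be the random vector obtained by retaining each element of $S_i$ independently with probability $1-p$ (dropping it with probability $p$) and taking the mean of the retained elements (with the convention that the mean of an empty multiset is $0$). Then there exists $p \in (0,1)$ such that $M_1^{(p)}$ and $M_2^{(p)}$ have different distributions; that is, $S_1$ and $S_2$ can be distinguished by a DropGNN with mean neighborhood aggregation.
   Context: In a DropGNN with mean neighborhood aggregation, a node $u$ whose neighbors have the multiset of feature vectors $S$ computes, in each run, the mean of the features of those neighbors that were not dropped; each node is dropped independently with probability $p$ in each run, and the results of many independent runs are aggregated. Two neighbor multisets are distinguishable if the resulting distributions of aggregated values differ. *)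

(* Defs.v *)
From HB Require Import structures.
From mathcomp Require Import all_boot all_order all_algebra.
From mathcomp Require Import reals.
Set Implicit Arguments. Unset Strict Implicit. Unset Printing Implicit Defensive.
Import Order.TTheory GRing.Theory Num.Theory.
Local Open Scope ring_scope.

(* A multiset of vectors in R^m is a sequence, considered up to permutation
   (perm_eq).  A "run" of the dropping process is a mask b : bitseq of the same
   length, where true = retained (probability 1-p), false = dropped (prob. p). *)

Definition mask_prob (R : realType) (p : R) (b : seq bool) : R :=
  \prod_(x <- b) (if x then 1 - p else p).

Definition retained_mean (R : realType) (m : nat) (S : seq 'rV[R]_m)
    (b : seq bool) : 'rV[R]_m :=
  let T := mask b S in
  if size T == 0%N then 0 else (size T)%:R^-1 *: \sum_(v <- T) v.

Definition mean_law (R : realType) (m : nat) (p : R) (S : seq 'rV[R]_m)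
    (v : 'rV[R]_m) : R :=
  \sum_(b : (size S).-tuple bool | retained_mean S b == v) mask_prob p b.

(* Main.v *)
Require Import Defs.
From HB Require Import structures.
From mathcomp Require Import all_boot all_order all_algebra.
From mathcomp Require Import reals.
From mathcomp Require Import ring.
Import Order.TTheory GRing.Theory Num.Theory.
Local Open Scope ring_scope.

Fixpoint oh (n i : nat) : seq bool :=
  match n with
  | 0 => [::]
  | n'.+1 => match i with 0 => true :: nseq n' false | i'.+1 => false :: oh n' i' end
  end.

Lemma size_oh n i : size (oh n i) = n.
Proof. by elim: n i => [|n IH] [|i] //=; rewrite ?size_nseq ?IH. Qed.

Lemma count_nseqF n : count id (nseq n false) = 0%N.
Proof. by elim: n. Qed.

Lemma count_oh n i : (i < n)%N -> count id (oh n i) = 1%N.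
Proof.
elim: n i => [|n IH] [|i] //=; first by rewrite count_nseqF.
by move=> /IH ->.
Qed.

Lemma count0_nseq (s : seq bool) : count id s = 0%N -> s = nseq (size s) false.
Proof. by elim: s => [|[] s IH] //= /IH <-. Qed.

Lemma count1 (s : seq bool) : count id s = 1%N ->
  exists2 i, (i < size s)%N & s = oh (size s) i.
Proof.
elim: s => [|[] s IH] //=.
  by rewrite add1n => -[] /count0_nseq e; exists 0%N => //; rewrite -e.
rewrite add0n => /IH [i lt e]; exists i.+1 => //; by rewrite -e.
Qed.

Lemma oh_inj n i j : (i < n)%N -> (j < n)%N -> oh n i = oh n j -> i = j.
Proof.
elim: n i j => [|n IH] [|i] [|j] //=.
all: try by case: n {IH}.
by rewrite !ltnS => Hi Hj [] /(IH _ _ Hi Hj) ->.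
Qed.

Lemma mask_oh (T : Type) (x0 : T) (S : seq T) i : (i < size S)%N ->
  mask (oh (size S) i) S = [:: nth x0 S i].
Proof.
elim: S i => [|x S IH] [|i] //=; first by rewrite mask_false.
by move=> /IH.
Qed.

Section Main.
Context {R : realType} {m : nat}.

Definition ohT {n} (i : 'I_n) : n.-tuple bool := insubd (nseq_tuple n false) (oh n i).

Lemma val_ohT {n} (i : 'I_n) : val (ohT i) = oh n i.
Proof. by rewrite /ohT val_insubd size_oh eqxx. Qed.

Lemma rm_oh (S : seq 'rV[R]_m) (i : 'I_(size S)) :
  retained_mean S (ohT i) = nth 0 S i.
Proof.
rewrite /retained_mean val_ohT (mask_oh _ 0) //= invr1 scale1r.
by rewrite big_seq1.
Qed.

Definition G (S : seq 'rV[R]_m) (v : 'rV[R]_m) : {poly R} :=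
  \sum_(b : (size S).-tuple bool | retained_mean S b == v) 'X^(count id b).

Lemma mask_probE (p t : R) (b : seq bool) : 1 - p = p * t ->
  mask_prob p b = p ^+ size b * t ^+ count id b.
Proof.
move=> e; rewrite /mask_prob; elim: b => [|x b IH]; first by rewrite big_nil mulr1.
rewrite big_cons IH /= exprS; case: x => /=; rewrite ?e ?add1n ?add0n ?exprS; ring.
Qed.

Lemma mean_lawE (p t : R) S v : 1 - p = p * t ->
  mean_law p S v = p ^+ size S * (G S v).[t].
Proof.
move=> e; rewrite /mean_law /G horner_sum mulr_sumr; apply: eq_bigr => b _.
by rewrite (mask_probE _ _ _ e) hornerXn size_tuple.
Qed.

Lemma coef1G S v :
  (G S v)`_1 = \sum_(i < size S) (if nth 0 S i == v then 1 else 0).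
Proof.
rewrite /G coef_sum.
under eq_bigr => b _ do rewrite coefXn.
transitivity (\sum_(b : (size S).-tuple bool) \sum_(i < size S)
   (if b == ohT i then (if nth 0 S i == v then 1 else 0) else 0) : R).
  rewrite big_mkcond; apply: eq_bigr => b _.
  case: (boolP (count id b == 1%N)).
    move/eqP => /count1 [i ilt eb].
    rewrite size_tuple in ilt eb.
    pose i' : 'I_(size S) := Ordinal ilt.
    have -> : b = ohT i' by apply: val_inj; rewrite val_ohT.
    rewrite (bigD1 i') //= eqxx big1 ?addr0.
      by rewrite rm_oh val_ohT count_oh //=; case: ifP.
    move=> j nj; rewrite (_ : (ohT i' == ohT j) = false) //; apply/negbTE.
    apply: contra nj => /eqP/(congr1 val); rewrite !val_ohT.
    by move=> /(oh_inj _ _ _ ilt (ltn_ord j)) ej; apply/eqP/val_inj; rewrite /= -ej.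
  move=> nc; rewrite big1.
    by case: ifP => // _; rewrite eq_sym; move/negbTE: nc => ->.
  move=> j _; case: eqP => // eb; move: nc; rewrite eb val_ohT count_oh //.
rewrite exchange_big; apply: eq_bigr => i _.
by rewrite -big_mkcond big_pred1_eq.
Qed.

Lemma sum_count (S : seq 'rV[R]_m) v :
  \sum_(i < size S) (if nth 0 S i == v then 1 else 0) = (count_mem v S)%:R :> R.
Proof.
rewrite -sum1_count natr_sum (big_nth 0) big_mkord /=.
by rewrite [RHS]big_mkcond; apply: eq_bigr => i _; case: ifP.
Qed.

End Main.

Theorem lemma1 (R : realType) (m : nat) (S1 S2 : seq 'rV[R]_m) :
  (0 < m)%N ->
  (0 < size S1)%N ->
  size S1 = size S2 ->
  ~~ perm_eq S1 S2 ->
  exists p : R, 0 < p < 1 /\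
    exists v : 'rV[R]_m, mean_law p S1 v != mean_law p S2 v.
Proof.
move=> _ n0 eqs nperm.
have [v _ hv] : exists2 v, v \in S1 ++ S2 & count_mem v S1 != count_mem v S2.
  by move: nperm; rewrite /perm_eq => /allPn.
set g := G S1 v - G S2 v.
have g0 : g != 0.
  apply/eqP => /(congr1 (fun q : {poly R} => q`_1)).
  rewrite coefB coef0 !coef1G !sum_count => /eqP; rewrite subr_eq0 eqr_nat.
  by rewrite (negbTE hv).
have [t t0 nt] : exists2 t : R, 0 < t & ~~ root g t.
  pose rs := [seq (i.+1)%:R : R | i <- iota 0 (size g)].
  case: (boolP (all (root g) rs)).
    move=> H; have urs : uniq rs.
      rewrite map_inj_uniq ?iota_uniq // => i j /eqP.
      by rewrite eqr_nat eqSS => /eqP.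
    by have := max_poly_roots g0 H urs; rewrite size_map size_iota ltnn.
  move/allPn => [x /mapP [i _ ->] nr]; exists (i.+1)%:R => //.
have t1 : 1 + t != 0 by rewrite gt_eqF // addr_gt0 // ltr01.
pose p := (1 + t)^-1.
have e : 1 - p = p * t by rewrite /p; field.
exists p; split.
  apply/andP; split; first by rewrite invr_gt0 addr_gt0 // ltr01.
  by rewrite invf_lt1 ?addr_gt0 ?ltr01 // ltrDl.
exists v; rewrite !(mean_lawE _ _ _ _ e) -eqs.
rewrite -subr_eq0 -mulrBr mulf_eq0 negb_or -hornerN -hornerD -/g.
rewrite expf_eq0 negb_and /p invr_eq0 t1 orbT /=.
by rewrite -rootE.
Qed.
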